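(* Let $p$ be a prime and $G_0$ a finite centerless $p$-perfect group with $p$ dividing $|G_0|$. Let $\phi:\tilde G_p\to G_0$ be the universal $p$-Frattini cover of $G_0$, let $\ker_0=\ker(\phi)$ and let $\ker_1$ be the Frattini subgroup of $\ker_0$ (the closed subgroup generated by $p$-th powers and commutators of elements of $\ker_0$). Put $G_1=\tilde G_p/\ker_1$ and let $\phi_{1,0}:G_1\to G_0$ be the natural map. Let $P_0$ be a $p$-Sylow subgroup of $G_0$ and $G_0'=N_{G_0}(P_0)$ its normalizer. Then the extension $\phi_{1,0}^{-1}(G_0')\to G_0'$ (restriction of $\phi_{1,0}$) is not split.
   Context: A finite group is $p$-perfect if it has no $\mathbb{Z}/p$ quotient. The universal $p$-Frattini cover $\phi:\tilde G_p\to G_0$ is the (unique up to isomorphism) profinite cover of $G_0$ which is minimal among covers by $p$-projective profinite groups; its kernel is a pro-free pro-$p$ group contained in the Frattini subgroup of $\tilde G_p$, and it is versal for Frattini covers of $G_0$ with $p$-group kernel. In particular $G_1\to G_0$ is the universal Frattini cover of $G_0$ with elementary abelian $p$-group kernel. *)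

(* Defs.v *)
From mathcomp Require Import all_boot all_fingroup all_solvable.
Set Implicit Arguments. Unset Strict Implicit. Unset Printing Implicit Defensive.
Local Open Scope group_scope.

Definition p_perfect (p : nat) (rT : finGroupType) (G0 : {set rT}) : Prop :=
  ~ exists N : {group rT}, N <| G0 /\ #|G0 : N| = p.

Definition frattini_abelem_cover (p : nat) (gT rT : finGroupType)
    (G : {group gT}) (G0 : {set rT}) (f : {morphism G >-> rT}) : Prop :=
  [/\ f @* G = G0, 'ker f \subset 'Phi(G) & p.-abelem ('ker f)].

(* The universal Frattini cover of G0 with elementary abelian p-group kernel
   (i.e. G_1 -> G_0): a Frattini cover with elementary abelian p kernel which is
   versal among all such covers: every such cover g : H -> G0 receives a
   homomorphism h : G -> H over G0 (g o h = f). This determines G -> G0 up to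
   isomorphism over G0. *)
Definition universal_frattini_abelem_cover (p : nat) (gT rT : finGroupType)
    (G : {group gT}) (G0 : {set rT}) (f : {morphism G >-> rT}) : Prop :=
  @frattini_abelem_cover p gT rT G G0 f /\
  forall (hT : finGroupType) (H : {group hT}) (g : {morphism H >-> rT}),
    @frattini_abelem_cover p hT rT H G0 g ->
    exists h : {morphism G >-> hT},
      h @* G \subset H /\ {in G, forall x, g (h x) = f x}.

Definition restr_ext_splits (gT rT : finGroupType) (G : {group gT})
    (f : {morphism G >-> rT}) (N : {group rT}) : Prop :=
  exists s : {morphism N >-> gT},
    s @* N \subset G /\ {in N, forall x, f (s x) = x}.

(* Main.v *)
From HB Require Import structures.
Require Import Defs.
From mathcomp Require Import all_boot all_algebra all_fingroup all_solvable.
Set Implicit Arguments. Unset Strict Implicit. Unset Printing Implicit Defensive.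
Import GRing.Theory.

Section WR.
Variables (rT : finGroupType) (m : nat).
Definition wr_type := ({ffun rT -> 'Z_m} * rT)%type.
HB.instance Definition _ := Finite.on wr_type.
Local Open Scope ring_scope.
Definition wact (g : rT) (F : {ffun rT -> 'Z_m}) : {ffun rT -> 'Z_m} :=
  [ffun h => F (h * g)%g].
Definition wmul (u v : wr_type) : wr_type := (u.1 + wact u.2 v.1, (u.2 * v.2)%g).
Definition wone : wr_type := (0, 1%g).
Definition winv (u : wr_type) : wr_type := (- wact (u.2^-1)%g u.1, (u.2^-1)%g).
Lemma wactM g1 g2 F : wact g1 (wact g2 F) = wact (g1 * g2)%g F.
Proof. by apply/ffunP=> h; rewrite !ffunE mulgA. Qed.
Lemma wactD g F1 F2 : wact g (F1 + F2) = wact g F1 + wact g F2.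
Proof. by apply/ffunP=> h; rewrite !ffunE. Qed.
Lemma wactN g F : wact g (- F) = - wact g F.
Proof. by apply/ffunP=> h; rewrite !ffunE. Qed.
Lemma wact0 g : wact g 0 = 0.
Proof. by apply/ffunP=> h; rewrite !ffunE. Qed.
Lemma wact1 F : wact 1%g F = F.
Proof. by apply/ffunP=> h; rewrite !ffunE mulg1. Qed.
Lemma wmulA : associative wmul.
Proof. by move=> [a x] [b y] [c z]; rewrite /wmul /= wactD wactM addrA mulgA. Qed.
Lemma wmul1 : left_id wone wmul.
Proof. by move=> [a x]; rewrite /wmul /= wact1 add0r mul1g. Qed.
Lemma wmulV : left_inverse wone winv wmul.
Proof. by move=> [a x]; rewrite /wmul /= addNr mulVg. Qed.
HB.instance Definition _ := Finite_isGroup.Build wr_type wmulA wmul1 wmulV.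
End WR.
Import GRing.Theory.
Lemma wmulE (rT : finGroupType) m (u v : wr_type rT m) :
  (u * v)%g = ((u.1 + wact u.2 v.1)%R, (u.2 * v.2)%g).
Proof. by []. Qed.
Lemma wmul1E (rT : finGroupType) m : (1 : wr_type rT m)%g = (0%R, 1%g).
Proof. by []. Qed.

Local Open Scope ring_scope.
Lemma Zpp_nat_eq (p a b : nat) : (1 < p)%N ->
  ((a%:R *+ p : 'Z_(p*p)) == b%:R *+ p) = (a == b %[mod p])%N.
Proof.
move=> p1; rewrite -!mulrnA !Zp_nat -val_eqE /= Zp_cast; last first.
  by rewrite (@ltn_trans p) // -{1}(muln1 p) ltn_pmul2l // ltnW.
by rewrite -!muln_modl eqn_pmul2r // ltnW.
Qed.

Lemma wexp (rT : finGroupType) m (u : wr_type rT m) n :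
  (u ^+ n)%g = (\sum_(i < n) wact (u.2 ^+ i)%g u.1, (u.2 ^+ n)%g).
Proof.
elim: n => [|n IH]; first by rewrite expg0 big_ord0.
by rewrite expgSr IH wmulE /= big_ord_recr /= expgSr.
Qed.

Section Cover.
Variables (rT : finGroupType) (G0 : {group rT}) (p : nat) (x : rT).
Hypotheses (pr_p : prime p) (G0x : x \in G0) (ox : #[x]%g = p).
Local Notation m := (p * p)%N.
Local Notation T := (wr_type rT m).
Local Open Scope group_scope.

Definition logx (c : rT) : nat := oapp val 0%N [pick k : 'I_#[x] | x ^+ k == c].

Lemma logxK c : c \in <[x]> -> x ^+ logx c = c.
Proof.
move=> /cyclePmin [i lti ->]; rewrite /logx; case: pickP => [k /eqP //|].
by move/(_ (Ordinal lti)); rewrite eqxx.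
Qed.

Definition omega (c : rT) : 'Z_m := ((logx c)%:R *+ p)%R.

Lemma omegaM c d : c \in <[x]> -> d \in <[x]> -> omega (c * d) = (omega c + omega d)%R.
Proof.
move=> Cc Cd; rewrite /omega -mulrnDl -natrD; apply/eqP.
by rewrite Zpp_nat_eq ?prime_gt1 // -ox -eq_expg_mod_order expgD !logxK // groupM.
Qed.

Definition rr (h : rT) := repr (<[x]> :* h).
Definition psi (h : rT) := h * (rr h)^-1.
Definition phi (h : rT) := omega (psi h).
Definition phi0 (h : rT) : 'Z_m := (logx (psi h))%:R.

Lemma psiC h : psi h \in <[x]>.
Proof.
have := mem_repr_rcoset <[x]> h; case/rcosetP => c Cc.
by rewrite /psi /rr => ->; rewrite invMg mulKVg groupV.
Qed.

Lemma rrM c h : c \in <[x]> -> rr (c * h) = rr h.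
Proof. by move=> Cc; rewrite /rr rcosetM rcoset_id. Qed.

Lemma phiM c h : c \in <[x]> -> phi (c * h) = (omega c + phi h)%R.
Proof. by move=> Cc; rewrite /phi /psi rrM // -mulgA omegaM // psiC. Qed.

Lemma psiK h : h = psi h * rr h.
Proof. by rewrite /psi mulgKV. Qed.
Definition Eset : {set T} :=
  [set u : T | [&& u.2 \in G0,
     [forall c in <[x]>, [forall h, u.1 (c * h) == u.1 h]] &
     [forall h, u.1 h *+ p == (phi h - phi (h * u.2))%R]]].

Lemma EsetP (u : T) : reflect [/\ u.2 \in G0, forall c h, c \in <[x]> -> u.1 (c * h) = u.1 h &
     forall h, u.1 h *+ p = (phi h - phi (h * u.2))%R] (u \in Eset).
Proof.
rewrite inE; apply: (iffP and3P) => [[A /forall_inP B /forallP D]|[A B D]]; split => //.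
- by move=> c h Cc; apply/eqP; move/forallP: (B c Cc).
- by move=> h; apply/eqP.
- by apply/forall_inP => c Cc; apply/forallP => h; rewrite B.
- by apply/forallP => h; rewrite D.
Qed.

Lemma gE : group_set Eset.
Proof.
apply/group_setP; split.
  apply/EsetP; rewrite wmul1E /=; split => [|c h _|h]; rewrite ?ffunE ?mulg1 ?subrr ?mul0rn //.
move=> u v /EsetP [u1 u2 u3] /EsetP [v1 v2 v3]; apply/EsetP; rewrite wmulE /=.
split => [|c h Cc|h]; rewrite ?ffunE ?ffunDE.
- exact: groupM.
- by rewrite u2 // -mulgA (v2 c).
- by rewrite mulrnDl u3 v3 mulgA addrA subrK.
Qed.

Definition EG := Group gE.

Definition wsnd (u : T) : rT := u.2.
Lemma wsndM : {in [set: T] &, {morph wsnd : u v / u * v}}.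
Proof. by []. Qed.
Definition wsndm : {morphism [set: T] >-> rT} := Morphism wsndM.

Definition wsec (g : rT) : T := ([ffun h => phi0 (rr h) - phi0 (rr h * g)]%R, g).

Lemma wsecE g : g \in G0 -> wsec g \in EG.
Proof.
move=> Gg; apply/EsetP; split => //= [c h Cc|h]; rewrite !ffunE ?rrM //.
rewrite mulrnBl.
have -> : (phi0 (rr h) *+ p = phi (rr h))%R by [].
have -> : (phi0 (rr h * g) *+ p = phi (rr h * g))%R by [].
have e1 : phi h = (omega (psi h) + phi (rr h))%R by rewrite -phiM ?psiC // -psiK.
have e2 : phi (h * g) = (omega (psi h) + phi (rr h * g))%R by rewrite -phiM ?psiC // mulgA -psiK.
by rewrite e1 e2 opprD addrACA subrr add0r.
Qed.

Lemma im_EG : wsndm @* EG = G0.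
Proof.
apply/eqP; rewrite eqEsubset; apply/andP; split.
  by apply/subsetP => g /morphimP [u _ /EsetP [? _ _] ->].
apply/subsetP => g Gg; apply/morphimP; exists (wsec g) => //; exact: wsecE.
Qed.
Definition Pred := [pred S : {group T} | (S \subset EG) && (wsndm @* S == G0)].

Lemma zero_ffunE (h : rT) : (0 : {ffun rT -> 'Z_m})%R h = 0%R.
Proof. by rewrite ffunE. Qed.

Lemma cover_exists : exists (hT : finGroupType) (H : {group hT})
    (g : {morphism H >-> rT}),
  frattini_abelem_cover p G0 g /\ {in H, forall u, g u = x -> u ^+ p != 1}.
Proof.
have PEG : Pred EG by rewrite /= subxx im_EG eqxx.
have [S minS sSE] := mingroup_exists PEG.
have [/andP [_ /eqP imS] minS'] := mingroupP minS.
pose g := restrm (subsetT S) wsndm.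
have kerP' u : u \in S :&: 'ker wsndm -> u \in EG /\ u.2 = 1.
  by case/setIP => Su Ku; split; [exact: (subsetP sSE u Su) | exact: (mker Ku)].
exists T, S, g; split; last first.
  move=> u Su gu; have /EsetP [_ C2 C3] : u \in EG by apply: (subsetP sSE).
  have ux : u.2 = x by [].
  apply/eqP => /(congr1 (fun w : T => w.1 1)); rewrite wexp ux wmul1E /= zero_ffunE.
  rewrite sum_ffunE (eq_bigr (fun _ => u.1 1)); last first.
    by move=> i _; rewrite ffunE mul1g -{1}[x ^+ i]mulg1 C2 // mem_cycle.
  rewrite sumr_const card_ord C3 ux mul1g -{1}[x]mulg1 phiM ?cycle_id //.
  rewrite opprD addrCA subrr addr0 => /eqP; rewrite oppr_eq0 -(mul0rn _ p).
  rewrite -[0%R]/(0%:R : 'Z_m) Zpp_nat_eq ?prime_gt1 // -ox -eq_expg_mod_order.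
  rewrite logxK ?cycle_id // expg0 -order_eq1 ox => /eqP p1.
  by move: pr_p; rewrite p1.
split.
- by rewrite morphim_restrm setIid.
- rewrite ker_restrm /Frattini; apply/bigcapsP => W /predU1P [-> | maxW].
    exact: subsetIl.
  have nsK : S :&: 'ker wsndm <| S by rewrite -(ker_restrm (subsetT S)) ker_normal.
  have sWS : W \subset S := proper_sub (maxgroupp maxW).
  have nKW : W \subset 'N(S :&: 'ker wsndm) := subset_trans sWS (normal_norm nsK).
  have defWK := norm_joinEl nKW.
  case/maxgroupP: maxW => /andP[_ nSW] maxW'.
  have sWKS : W <*> (S :&: 'ker wsndm)%G \subset S by rewrite join_subG sWS subsetIl.
  case: (boolP (S \subset W <*> (S :&: 'ker wsndm)%G)) => [sSWK|nSWK]; last first.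
    have := maxW' (W <*> (S :&: 'ker wsndm)%G)%G; rewrite /proper sWKS nSWK.
    by move=> /(_ isT (joing_subl _ _)) <-; exact: joing_subr.
  have eWS : W <*> (S :&: 'ker wsndm)%G = S by apply/eqP; rewrite eqEsubset sWKS.
  have /trivgP K1 : wsndm @* (S :&: 'ker wsndm)%G \subset [1].
    by rewrite -(morphim_ker wsndm) morphimS ?subsetIr.
  have imW : wsndm @* W = G0.
    by rewrite -imS -eWS defWK morphimMl ?subsetT // K1 mulg1.
  have := minS' W; rewrite /= (subset_trans sWS sSE) imW eqxx => /(_ isT sWS) eW.
  by rewrite eW subxx in nSW.
- rewrite ker_restrm; apply/abelemP => //; split.
    apply/centsP => u Ku v Kv; rewrite /commute !wmulE.
    rewrite (kerP' u Ku).2 (kerP' v Kv).2 !wact1 mulg1 addrC.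
    by [].
  move=> u Ku; have [/EsetP [_ _ C3] u2] := kerP' u Ku.
  rewrite wexp u2 expg1n wmul1E; congr pair; apply/ffunP => h.
  rewrite sum_ffunE zero_ffunE (eq_bigr (fun _ => u.1 h)); last first.
    by move=> i _; rewrite expg1n wact1.
  by rewrite sumr_const card_ord C3 u2 mulg1 subrr.
Qed.
End Cover.

Local Open Scope group_scope.

Theorem lemma2p7 (p : nat) (gT rT : finGroupType) (G1 : {group gT})
    (G0 : {group rT}) (phi10 : {morphism G1 >-> rT}) (P0 : {group rT}) :
  prime p ->
  'Z(G0) = 1 ->
  p_perfect p G0 ->
  (p %| #|G0|)%N ->
  universal_frattini_abelem_cover p G0 phi10 ->
  P0 \in 'Syl_p(G0) ->
  ~ (restr_ext_splits phi10 ('N_G0(P0))%G).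
Proof.
move=> pr_p _ _ pG0 [[imG1 kerPhi abelM] univ] sylP [s [sN sK]].
have pM : p.-group ('ker phi10) := abelem_pgroup abelM.
have abM : abelian ('ker phi10) := abelem_abelian abelM.
have nsMG : 'ker phi10 <| G1 := ker_normal phi10.
pose Q := (phi10 @*^-1 P0)%G.
have sMQ : 'ker phi10 \subset Q := ker_sub_pre phi10 P0.
have sQG : Q \subset G1 := subsetIl _ _.
move: sylP; rewrite inE => /and3P [sPG pP p'iP].
have iQ : #|G1 : Q| = #|G0 : P0|.
  rewrite -(index_morphpre P0 (_ : G0 \subset phi10 @* G1)) ?imG1 //.
  by rewrite -imG1 morphimGK ?subsetIl.
have co : coprime #|'ker phi10| #|G1 : Q| by rewrite iQ (pnat_coprime pM p'iP).
have sPN : P0 \subset 'N_G0(P0) by rewrite subsetI sPG normG.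
have splitQ : [splits Q, over 'ker phi10].
  apply/splitsP; exists (s @* P0)%G; apply/complP; split.
    apply/trivgP/subsetP => y /setIP [My /morphimP [z Nz Pz ey]]; rewrite ey in My *.
    have := sK z Nz; rewrite (mker My) => <-; by rewrite morph1 inE.
  apply/eqP; rewrite eqEsubset; apply/andP; split.
    rewrite mul_subG //; apply/subsetP => y /morphimP [z Nz Pz ->].
    have G1sz : s z \in G1 by apply: (subsetP sN); apply: mem_morphim.
    by rewrite mem_morphpre // sK.
  apply/subsetP => y /morphpreP [Gy Py].
  have Nz : phi10 y \in 'N_G0(P0) by apply: (subsetP sPN).
  have G1sz : s (phi10 y) \in G1 by apply: (subsetP sN); apply: mem_morphim.
  rewrite -(mulgKV (s (phi10 y)) y) mem_mulg //; last by apply: mem_morphim.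
  by rewrite !inE groupM ?groupV //= morphM ?groupV // morphV // sK // mulgV.
have splitG : [splits G1, over 'ker phi10] by rewrite (Gaschutz_split nsMG sMQ sQG abM co).
case/splitsP: splitG => K /complP [tiMK defG].
have sKG : K \subset G1 by rewrite -defG mulG_subr.
have eK : K :=: G1.
  rewrite -(genGid K); apply: Phi_nongen; apply/eqP; rewrite eqEsubset.
  rewrite join_subG Phi_sub sKG /= -{1}defG mul_subG ?joing_subr //.
  exact: subset_trans kerPhi (joing_subl _ _).
have M1 : 'ker phi10 = 1.
  by move: tiMK; rewrite eK (setIidPl (normal_sub nsMG)).
have [x Gx ox] := Cauchy pr_p pG0.
have [hT [H [g [cov nsp]]]] := @cover_exists _ G0 p x pr_p ox.
have [h [shH hK]] := univ hT H g cov.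
have : x \in phi10 @* G1 by rewrite imG1.
case/morphimP => y _ Gy xy.
have y1 : y ^+ p = 1.
  have : y ^+ p \in 'ker phi10.
    by rewrite !inE groupX //= morphX // -xy -ox expg_order.
  by rewrite M1 inE => /eqP.
have Hhy : h y \in H by apply: (subsetP shH); apply: mem_morphim.
have := nsp (h y) Hhy; rewrite hK // -xy => /(_ erefl).
by rewrite -morphX // y1 morph1 eqxx.
Qed.
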